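(* Let $K\subset\mathbb{R}^2$ be a convex set such that a maximal-area triangle $T$ contained in $K$ is an equilateral triangle of side length $1$ with barycenter at the origin $o$. Then every point $p\in\partial K$ is $(60^\circ,\tfrac12)$-bisecting in $K$.
   Context: For a convex set $C$ containing $o$ and $p\in\partial C$, $p$ is called $(\theta,\ell)$-bisecting if the unique isosceles triangle $T_p(\theta,\ell)$ with apex $p$, apex angle $\theta$, two equal sides of length $\ell$ emanating from $p$, and such that the segment $po$ internally bisects the apex angle, is contained in $C$. *)

(* Defs.v *)
From Stdlib Require Import Reals Lra.
Open Scope R_scope.

Definition pt : Type := (R * R)%type.

Definition padd (x y : pt) : pt := (fst x + fst y, snd x + snd y).
Definition pscale (k : R) (x : pt) : pt := (k * fst x, k * snd x).
Definition pnorm (x : pt) : R := sqrt (fst x * fst x + snd x * snd x).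
Definition pdist (x y : pt) : R := pnorm (padd x (pscale (-1) y)).
Definition origin : pt := (0, 0).

Definition rot (t : R) (x : pt) : pt :=
  (cos t * fst x - sin t * snd x, sin t * fst x + cos t * snd x).

Definition plane_convex (K : pt -> Prop) : Prop :=
  forall x y t, K x -> K y -> 0 <= t <= 1 ->
    K (padd (pscale (1 - t) x) (pscale t y)).

Definition plane_closed (K : pt -> Prop) : Prop :=
  forall p, (forall eps, 0 < eps -> exists x, K x /\ pdist p x < eps) -> K p.

Definition plane_boundary (K : pt -> Prop) (p : pt) : Prop :=
  forall eps, 0 < eps ->
    (exists x, K x /\ pdist p x < eps) /\ (exists x, ~ K x /\ pdist p x < eps).

Definition in_triangle (a b c x : pt) : Prop :=
  exists s t u, 0 <= s /\ 0 <= t /\ 0 <= u /\ s + t + u = 1 /\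
    x = padd (pscale s a) (padd (pscale t b) (pscale u c)).

Definition triangle_in (a b c : pt) (K : pt -> Prop) : Prop :=
  forall x, in_triangle a b c x -> K x.

Definition tri_area (a b c : pt) : R :=
  Rabs ((fst b - fst a) * (snd c - snd a) - (snd b - snd a) * (fst c - fst a)) / 2.

Definition max_area_triangle (K : pt -> Prop) (a b c : pt) : Prop :=
  triangle_in a b c K /\
  forall a' b' c', triangle_in a' b' c' K -> tri_area a' b' c' <= tri_area a b c.

Definition barycenter (a b c : pt) : pt := pscale (1/3) (padd a (padd b c)).

(* T_p(theta, l) relative to the center o: apex p, equal sides of length l
   in directions obtained by rotating the unit vector u from p towards o
   by +theta/2 and -theta/2 (so segment p o bisects the apex angle). *)
Definition Tp_v1 (o p : pt) (theta l : R) : pt :=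
  let u := pscale (/ pdist o p) (padd o (pscale (-1) p)) in
  padd p (pscale l (rot (theta / 2) u)).
Definition Tp_v2 (o p : pt) (theta l : R) : pt :=
  let u := pscale (/ pdist o p) (padd o (pscale (-1) p)) in
  padd p (pscale l (rot (- (theta / 2)) u)).

Definition bisecting (K : pt -> Prop) (o : pt) (theta l : R) (p : pt) : Prop :=
  p <> o /\ triangle_in p (Tp_v1 o p theta l) (Tp_v2 o p theta l) K.

(* Main.v *)
Require Import Defs.
From Stdlib Require Import Reals Lra Psatz Nsatz.
Open Scope R_scope.

Definition comb3 (s : R) (x : pt) (t : R) (y : pt) (u : R) (z : pt) : pt :=
  padd (pscale s x) (padd (pscale t y) (pscale u z)).

Lemma pt_eq (x y : pt) : fst x = fst y -> snd x = snd y -> x = y.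
Proof. destruct x, y; simpl; intros; subst; reflexivity. Qed.

Lemma conv_tri K x y z s t u : plane_convex K -> K x -> K y -> K z ->
  0 <= s -> 0 <= t -> 0 <= u -> s + t + u = 1 -> K (comb3 s x t y u z).
Proof.
  intros HK Hx Hy Hz Hs Ht Hu Hsum.
  destruct (Req_dec (t+u) 0) as [H0|H0].
  - assert (t = 0) by lra. assert (u = 0) by lra. subst.
    replace (comb3 s x 0 y 0 z) with x. exact Hx.
    apply pt_eq; unfold comb3, padd, pscale; simpl; replace s with 1 by lra; ring.
  - assert (Hp : 0 < t + u) by lra.
    set (l := u / (t+u)).
    assert (Hl : u = l * (t+u)) by (unfold l; field; lra).
    set (w := padd (pscale (1 - l) y) (pscale l z)).
    assert (Hw : K w). { apply HK; auto. split; nra. }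
    replace (comb3 s x t y u z) with (padd (pscale (1 - (t+u)) x) (pscale (t+u) w)).
    + apply HK; auto; lra.
    + apply pt_eq; unfold w, comb3, padd, pscale, l; simpl;
      replace s with (1 - (t+u)) by lra; field; lra.
Qed.

Lemma conv_triangle_in K x y z : plane_convex K -> K x -> K y -> K z ->
  triangle_in x y z K.
Proof.
  intros HK Hx Hy Hz q [s [t [u [Hs [Ht [Hu [Hsum Hq]]]]]]]. subst q.
  apply (conv_tri K x y z s t u); auto.
Qed.

Lemma core K a b c p al be ga k :
  plane_convex K -> K a -> K b -> K c -> K p ->
  p = comb3 al a be b ga c -> al + be + ga = 1 ->
  al <= 0 -> be <= 1 -> ga <= 1 -> 0 < k ->
  k * (1 - 3*al) <= 2 -> k * (3*be - 1) <= 2 ->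
  K (comb3 (al - k/2*(al-be)) a (be - k/2*(be-ga)) b (ga - k/2*(ga-al)) c).
Proof.
  intros HK Ha Hb Hc Hp Hpe Hs Hal Hbe Hga Hk H1 H2.
  destruct (Rle_lt_dec ga 0) as [Hg0|Hg0].
  - assert (ga = 0) by lra. assert (al = 0) by lra. assert (be = 1) by lra. subst.
    apply conv_tri; auto; nra.
  - set (sp := 1 - k/2*(ga-al)/ga).
    set (ta := k*(be*ga - al*al)/(2*ga)).
    set (tb := k*(ga*ga - al*be)/(2*ga)).
    assert (Hsp : 0 <= sp).
    { unfold sp.
      assert (k * (ga - al) <= 2 * ga).
      { destruct (Rle_lt_dec ga (1/3)).
        - assert (ga - al <= ga * (3*be - 1)) by nra. nra.
        - assert (ga - al <= ga * (1 - 3*al)) by nra. nra. }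
      assert (k/2*(ga-al)/ga <= 1).
      { apply (Rmult_le_reg_r ga); [lra|]. unfold Rdiv. field_simplify; lra. }
      lra. }
    assert (Hta : 0 <= ta).
    { unfold ta. apply Rmult_le_pos.
      - apply Rmult_le_pos; [lra|]. nra.
      - left; apply Rinv_0_lt_compat; lra. }
    assert (Htb : 0 <= tb).
    { unfold tb. apply Rmult_le_pos.
      - apply Rmult_le_pos; [lra|]. nra.
      - left; apply Rinv_0_lt_compat; lra. }
    replace (comb3 (al - k/2*(al-be)) a (be - k/2*(be-ga)) b (ga - k/2*(ga-al)) c)
      with (comb3 sp p ta a tb b).
    + apply conv_tri; auto. unfold sp, ta, tb. replace be with (1 - al - ga) by lra. field. lra.
    + subst p. apply pt_eq; unfold comb3, padd, pscale, sp, ta, tb; simpl;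
      replace be with (1 - al - ga) by lra; field; lra.
Qed.

Lemma c6_facts : cos (PI/6) * cos (PI/6) = 3/4 /\ 0 < cos (PI/6).
Proof.
  rewrite cos_PI6. split.
  - replace (sqrt 3 / 2 * (sqrt 3 / 2)) with (sqrt 3 * sqrt 3 / 4) by field.
    rewrite sqrt_sqrt; lra.
  - assert (0 < sqrt 3) by (apply sqrt_lt_R0; lra). lra.
Qed.

Lemma J_rel a1 a2 b1 b2 : 3*(a1*a1+a2*a2) = 1 -> 3*(b1*b1+b2*b2) = 1 -> 6*(a1*b1+a2*b2) = -1 ->
  a2 = -2*(a1*b2 - a2*b1)*(a1+2*b1) /\ b2 = 2*(a1*b2 - a2*b1)*(2*a1+b1) /\
  a1 = 2*(a1*b2 - a2*b1)*(a2+2*b2) /\ b1 = 2*(a1*b2 - a2*b1)*(-2*a2-b2).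
Proof. intros. repeat split; nsatz. Qed.

Lemma norm_rel a1 a2 b1 b2 al be : 3*(a1*a1+a2*a2) = 1 -> 3*(b1*b1+b2*b2) = 1 -> 6*(a1*b1+a2*b2) = -1 ->
  let ga := 1 - al - be in
  let x := al*a1 + be*b1 + ga*(-a1-b1) in
  let y := al*a2 + be*b2 + ga*(-a2-b2) in
  3 * (x*x+y*y) = al*al+be*be+ga*ga - al*be - be*ga - ga*al.
Proof. intros. subst ga x y. nsatz. Qed.

Lemma kb c6 r l : c6*c6 = 3/4 -> 0<c6 -> 0<r -> (3*l-1)*(3*l-1) <= 12*(r*r) ->
  2*c6/(3*r)*(3*l-1) <= 2 /\ 2*c6/(3*r)*(1-3*l) <= 2.
Proof.
  intros H1 H2 H3 H4.
  assert (Ht : (c6*(3*l-1))*(c6*(3*l-1)) <= (3*r)*(3*r)) by nra.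
  assert (Ht2 : c6*(3*l-1) <= 3*r /\ -(c6*(3*l-1)) <= 3*r) by (split; nra).
  replace (2*c6/(3*r)*(3*l-1)) with (2 * (c6*(3*l-1)) / (3*r)) by (field; lra).
  replace (2*c6/(3*r)*(1-3*l)) with (2 * (-(c6*(3*l-1))) / (3*r)) by (field; lra).
  split; apply (Rmult_le_reg_r (3*r)); try lra; unfold Rdiv; rewrite Rmult_assoc, Rinv_l; lra.
Qed.

Ltac permc := apply pt_eq; unfold comb3, padd, pscale; simpl; ring.

Lemma main_pos K a1 a2 b1 b2 c1 c2 p al be ga :
  plane_convex K -> K (a1,a2) -> K (b1,b2) -> K (c1,c2) -> K p ->
  c1 = -a1-b1 -> c2 = -a2-b2 ->
  3*(a1*a1+a2*a2) = 1 -> 3*(b1*b1+b2*b2) = 1 -> 6*(a1*b1+a2*b2) = -1 ->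
  a1*b2 - a2*b1 = cos (PI/6) / 3 ->
  p = comb3 al (a1,a2) be (b1,b2) ga (c1,c2) -> al+be+ga = 1 ->
  al <= 1 -> be <= 1 -> ga <= 1 -> (al <= 0 \/ be <= 0 \/ ga <= 0) ->
  p <> origin /\ K (Tp_v1 origin p (PI/3) (1/2)) /\ K (Tp_v2 origin p (PI/3) (1/2)).
Proof.
  intros HK Ha Hb Hc Hp Hc1 Hc2 Ga Gb Gab HD Hpe Hs Hal Hbe Hga Hneg.
  destruct c6_facts as [Hc6 Hc6p].
  set (c6 := cos (PI/6)) in *.
  destruct (J_rel a1 a2 b1 b2 Ga Gb Gab) as [Ja2 [Jb2 [Ja1 Jb1]]].
  rewrite HD in Ja2, Jb2, Ja1, Jb1.
  destruct p as [x y].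
  assert (Hx : x = al*a1 + be*b1 + ga*c1) by (injection Hpe; intros; subst; ring).
  assert (Hy : y = al*a2 + be*b2 + ga*c2) by (injection Hpe; intros; subst; ring).
  set (r := pdist origin (x,y)).
  assert (Hr2 : r * r = x*x + y*y).
  { unfold r, pdist, pnorm, padd, pscale, origin; simpl.
    rewrite sqrt_sqrt; [ring | nra]. }
  assert (Hr0 : 0 <= r) by (unfold r, pdist, pnorm; apply sqrt_pos).
  assert (HQ : 3 * (x*x+y*y) = al*al+be*be+ga*ga - al*be - be*ga - ga*al).
  { rewrite Hx, Hy, Hc1, Hc2.
    replace ga with (1 - al - be) by lra. apply norm_rel; auto. }
  set (Q := al*al+be*be+ga*ga - al*be - be*ga - ga*al) in HQ.
  assert (Bal : (3*al-1)*(3*al-1) <= 12 * (r*r)).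
  { assert (E : 4*Q - (3*al-1)*(3*al-1) = 3*((be-ga)*(be-ga))) by
      (unfold Q; replace al with (1-be-ga) by lra; ring).
    pose proof (Rle_0_sqr (be-ga)). unfold Rsqr in *. lra. }
  assert (Bbe : (3*be-1)*(3*be-1) <= 12 * (r*r)).
  { assert (E : 4*Q - (3*be-1)*(3*be-1) = 3*((al-ga)*(al-ga))) by
      (unfold Q; replace be with (1-al-ga) by lra; ring).
    pose proof (Rle_0_sqr (al-ga)). unfold Rsqr in *. lra. }
  assert (Bga : (3*ga-1)*(3*ga-1) <= 12 * (r*r)).
  { assert (E : 4*Q - (3*ga-1)*(3*ga-1) = 3*((al-be)*(al-be))) by
      (unfold Q; replace ga with (1-al-be) by lra; ring).
    pose proof (Rle_0_sqr (al-be)). unfold Rsqr in *. lra. }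
  assert (Hrp : 0 < r).
  { destruct (Rlt_le_dec 0 r) as [h|h]; auto.
    assert (r = 0) by lra. rewrite H in *. 
    destruct Hneg as [h1|[h1|h1]]; nra. }
  split.
  { intro E. injection E; intros; subst. nra. }
  set (k := 2*c6/(3*r)).
  assert (Hk : 0 < k) by (unfold k; apply Rmult_lt_0_compat; [lra| apply Rinv_0_lt_compat; lra]).
  destruct (kb c6 r al Hc6 Hc6p Hrp Bal) as [ka1 ka2].
  destruct (kb c6 r be Hc6 Hc6p Hrp Bbe) as [kb1 kb2].
  destruct (kb c6 r ga Hc6 Hc6p Hrp Bga) as [kg1 kg2].
  fold k in ka1, ka2, kb1, kb2, kg1, kg2.
  assert (Hsin : sin (PI/6) = 1/2) by apply sin_PI6.
  assert (Hv1 : Tp_v1 origin (x,y) (PI/3) (1/2) =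
     comb3 (al - k/2*(al-be)) (a1,a2) (be - k/2*(be-ga)) (b1,b2) (ga - k/2*(ga-al)) (c1,c2)).
  { unfold Tp_v1, rot. fold r. replace (PI/3/2) with (PI/6) by field. fold c6. rewrite Hsin.
    apply pt_eq; unfold comb3, padd, pscale, rot, origin; simpl; rewrite Hx, Hy, Hc1, Hc2;
    replace ga with (1 - al - be) by lra; unfold k.
    - rewrite Ja2, Jb2. field. lra.
    - rewrite Ja1, Jb1. field. lra. }
  assert (Hv2 : Tp_v2 origin (x,y) (PI/3) (1/2) =
     comb3 (al - k/2*(al-ga)) (a1,a2) (be - k/2*(be-al)) (b1,b2) (ga - k/2*(ga-be)) (c1,c2)).
  { unfold Tp_v2, rot. fold r. replace (PI/3/2) with (PI/6) by field. rewrite cos_neg, sin_neg. fold c6. rewrite Hsin.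
    apply pt_eq; unfold comb3, padd, pscale, rot, origin; simpl; rewrite Hx, Hy, Hc1, Hc2;
    replace ga with (1 - al - be) by lra; unfold k.
    - rewrite Ja2, Jb2. field. lra.
    - rewrite Ja1, Jb1. field. lra. }
  rewrite Hv1, Hv2.
  destruct Hneg as [h|[h|h]]; split.
  - apply (core K (a1,a2) (b1,b2) (c1,c2) (x,y) al be ga k); auto.
  - replace (comb3 (al - k/2*(al-ga)) (a1,a2) (be - k/2*(be-al)) (b1,b2) (ga - k/2*(ga-be)) (c1,c2))
      with (comb3 (al - k/2*(al-ga)) (a1,a2) (ga - k/2*(ga-be)) (c1,c2) (be - k/2*(be-al)) (b1,b2)) by permc.
    apply (core K (a1,a2) (c1,c2) (b1,b2) (x,y) al ga be k); auto; try lra.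
    rewrite Hpe; permc.
  - replace (comb3 (al - k/2*(al-be)) (a1,a2) (be - k/2*(be-ga)) (b1,b2) (ga - k/2*(ga-al)) (c1,c2))
      with (comb3 (be - k/2*(be-ga)) (b1,b2) (ga - k/2*(ga-al)) (c1,c2) (al - k/2*(al-be)) (a1,a2)) by permc.
    apply (core K (b1,b2) (c1,c2) (a1,a2) (x,y) be ga al k); auto; try lra.
    rewrite Hpe; permc.
  - replace (comb3 (al - k/2*(al-ga)) (a1,a2) (be - k/2*(be-al)) (b1,b2) (ga - k/2*(ga-be)) (c1,c2))
      with (comb3 (be - k/2*(be-al)) (b1,b2) (al - k/2*(al-ga)) (a1,a2) (ga - k/2*(ga-be)) (c1,c2)) by permc.
    apply (core K (b1,b2) (a1,a2) (c1,c2) (x,y) be al ga k); auto; try lra.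
    rewrite Hpe; permc.
  - replace (comb3 (al - k/2*(al-be)) (a1,a2) (be - k/2*(be-ga)) (b1,b2) (ga - k/2*(ga-al)) (c1,c2))
      with (comb3 (ga - k/2*(ga-al)) (c1,c2) (al - k/2*(al-be)) (a1,a2) (be - k/2*(be-ga)) (b1,b2)) by permc.
    apply (core K (c1,c2) (a1,a2) (b1,b2) (x,y) ga al be k); auto; try lra.
    rewrite Hpe; permc.
  - replace (comb3 (al - k/2*(al-ga)) (a1,a2) (be - k/2*(be-al)) (b1,b2) (ga - k/2*(ga-be)) (c1,c2))
      with (comb3 (ga - k/2*(ga-be)) (c1,c2) (be - k/2*(be-al)) (b1,b2) (al - k/2*(al-ga)) (a1,a2)) by permc.
    apply (core K (c1,c2) (b1,b2) (a1,a2) (x,y) ga be al k); auto; try lra.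
    rewrite Hpe; permc.
Qed.

Lemma sqrt_eq1 s : 0 <= s -> sqrt s = 1 -> s = 1.
Proof. intros H E. rewrite <- (sqrt_sqrt s H), E. ring. Qed.

Definition bl (a1 a2 b1 b2 : R) (z : pt) := (fst z * b2 - snd z * b1)/(a1*b2 - a2*b1).
Definition bm (a1 a2 b1 b2 : R) (z : pt) := (a1 * snd z - a2 * fst z)/(a1*b2 - a2*b1).
Definition bg a1 a2 b1 b2 z := (1 - bl a1 a2 b1 b2 z - bm a1 a2 b1 b2 z)/3.

Lemma bary_repr a1 a2 b1 b2 z : a1*b2 - a2*b1 <> 0 ->
  z = comb3 (bl a1 a2 b1 b2 z + bg a1 a2 b1 b2 z) (a1,a2)
            (bm a1 a2 b1 b2 z + bg a1 a2 b1 b2 z) (b1,b2)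
            (bg a1 a2 b1 b2 z) (-a1-b1, -a2-b2).
Proof.
  intros HD. destruct z as [z1 z2].
  apply pt_eq; unfold comb3, padd, pscale, bg, bl, bm; simpl; field; auto.
Qed.

Lemma small e1 e2 b1 b2 D d : 3*(b1*b1+b2*b2)=1 -> 12*(D*D) = 1 -> e1*e1+e2*e2 = d*d -> 0 <= d ->
  Rabs ((e1*b2 - e2*b1)/D) <= 2*d.
Proof.
  intros Hb HD He Hd.
  assert (HD0 : D <> 0) by (intro; subst; lra).
  set (t := (e1*b2 - e2*b1)/D).
  assert (Ht : t * D = e1*b2 - e2*b1) by (unfold t; field; auto).
  assert (L : (e1*b2 - e2*b1)*(e1*b2 - e2*b1) + (e1*b1+e2*b2)*(e1*b1+e2*b2) = (e1*e1+e2*e2)*(b1*b1+b2*b2)) by ring.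
  assert (H2 : t*t*(D*D) <= d*d/3).
  { replace (t*t*(D*D)) with ((t*D)*(t*D)) by ring. rewrite Ht.
    assert (0 <= (e1*b1+e2*b2)*(e1*b1+e2*b2)) by apply Rle_0_sqr.
    assert (E : (e1*e1+e2*e2)*(b1*b1+b2*b2) = d*d/3) by (rewrite He; replace (b1*b1+b2*b2) with (1/3) by lra; field).
    lra. }
  assert (H3 : t*t <= 4*(d*d)) by nra.
  apply Rabs_le; split; nra.
Qed.

Lemma abs_b x e : Rabs x <= e -> -e <= x <= e.
Proof. unfold Rabs; destruct (Rcase_abs x); intros; lra. Qed.

Lemma area_bound al E : E <> 0 -> Rabs (al*E)/2 <= Rabs E / 2 -> al <= 1.
Proof.
  intros HE H. rewrite Rabs_mult in H.
  assert (0 < Rabs E) by (apply Rabs_pos_lt; auto).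
  assert (Rabs al <= 1) by nra.
  pose proof (Rle_abs al). lra.
Qed.

Lemma tri_vert x y z K : triangle_in x y z K -> K x /\ K y /\ K z.
Proof.
  intro H. repeat split; apply H.
  - exists 1, 0, 0. repeat split; try lra. apply pt_eq; unfold padd, pscale; simpl; ring.
  - exists 0, 1, 0. repeat split; try lra. apply pt_eq; unfold padd, pscale; simpl; ring.
  - exists 0, 0, 1. repeat split; try lra. apply pt_eq; unfold padd, pscale; simpl; ring.
Qed.

Theorem lemma3p2 (K : pt -> Prop) (a b c : pt) :
  plane_convex K -> plane_closed K ->
  max_area_triangle K a b c ->
  pdist a b = 1 -> pdist b c = 1 -> pdist c a = 1 ->
  barycenter a b c = origin ->
  forall p, plane_boundary K p -> bisecting K origin (PI / 3) (1 / 2) p.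
Proof.
  intros HK Hcl [HT Hmax] Hab Hbc Hca Hbar p Hbd.
  destruct a as [a1 a2], b as [b1 b2], c as [c1 c2].
  unfold barycenter, pscale, padd, origin in Hbar; simpl in Hbar.
  injection Hbar; intros E2 E1.
  assert (Hc1 : c1 = -a1-b1) by lra. assert (Hc2 : c2 = -a2-b2) by lra.
  subst c1 c2.
  unfold pdist, pnorm, padd, pscale in Hab, Hbc, Hca; simpl in Hab, Hbc, Hca.
  assert (nn : forall u v : R, 0 <= u*u + v*v) by (intros; nra).
  apply sqrt_eq1 in Hab; [|apply nn]. apply sqrt_eq1 in Hbc; [|apply nn]. apply sqrt_eq1 in Hca; [|apply nn].
  assert (H1 : (a1*a1+a2*a2) + (b1*b1+b2*b2) - 2*(a1*b1+a2*b2) = 1) by (rewrite <- Hab; ring).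
  assert (H2 : (a1*a1+a2*a2) + 4*(b1*b1+b2*b2) + 4*(a1*b1+a2*b2) = 1) by (rewrite <- Hbc; ring).
  assert (H3 : 4*(a1*a1+a2*a2) + (b1*b1+b2*b2) + 4*(a1*b1+a2*b2) = 1) by (rewrite <- Hca; ring).
  clear Hab Hbc Hca.
  assert (Ga : 3*(a1*a1+a2*a2) = 1) by lra.
  assert (Gb : 3*(b1*b1+b2*b2) = 1) by lra.
  assert (Gab : 6*(a1*b1+a2*b2) = -1) by lra.
  set (D := a1*b2 - a2*b1).
  assert (HD2 : 12*(D*D) = 1).
  { assert (L : D*D + (a1*b1+a2*b2)*(a1*b1+a2*b2) = (a1*a1+a2*a2)*(b1*b1+b2*b2)) by (unfold D; ring).
    replace (a1*a1+a2*a2) with (1/3) in L by lra. replace (b1*b1+b2*b2) with (1/3) in L by lra.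
    replace (a1*b1+a2*b2) with (-1/6) in L by lra. lra. }
  assert (HD0 : D <> 0) by (intro h; rewrite h in HD2; lra).
  destruct (tri_vert _ _ _ _ HT) as [Ka [Kb Kc]].
  assert (Kp : K p) by (apply Hcl; intros eps he; exact (proj1 (Hbd eps he))).
  set (al := bl a1 a2 b1 b2 p + bg a1 a2 b1 b2 p).
  set (be := bm a1 a2 b1 b2 p + bg a1 a2 b1 b2 p).
  set (ga := bg a1 a2 b1 b2 p).
  assert (Hrep : p = comb3 al (a1,a2) be (b1,b2) ga (-a1-b1,-a2-b2)) by (apply bary_repr; auto).
  assert (Hs : al + be + ga = 1) by (unfold al, be, ga, bg; field).
  set (E := (b1-a1)*((-a2-b2)-a2) - (b2-a2)*((-a1-b1)-a1)).
  assert (HE : E <> 0) by (intro h; apply HD0; unfold E in h; unfold D; lra).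
  destruct p as [x y].
  assert (Hal : al <= 1).
  { apply (area_bound al E HE).
    pose proof (Hmax (x,y) (b1,b2) (-a1-b1,-a2-b2) (conv_triangle_in K _ _ _ HK Kp Kb Kc)) as H.
    unfold tri_area in H; simpl in H.
    replace (al * E) with ((b1 - x) * (- a2 - b2 - y) - (b2 - y) * (- a1 - b1 - x)). exact H.
    unfold al, E, bg, bl, bm; simpl; fold D. unfold D in *. field. auto. }
  assert (Hbe : be <= 1).
  { apply (area_bound be E HE).
    pose proof (Hmax (a1,a2) (x,y) (-a1-b1,-a2-b2) (conv_triangle_in K _ _ _ HK Ka Kp Kc)) as H.
    unfold tri_area in H; simpl in H.
    replace (be * E) with ((x - a1) * (- a2 - b2 - a2) - (y - a2) * (- a1 - b1 - a1)). exact H.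
    unfold be, E, bg, bl, bm; simpl; fold D. unfold D in *. field. auto. }
  assert (Hga : ga <= 1).
  { apply (area_bound ga E HE).
    pose proof (Hmax (a1,a2) (b1,b2) (x,y) (conv_triangle_in K _ _ _ HK Ka Kb Kp)) as H.
    unfold tri_area in H; simpl in H.
    replace (ga * E) with ((b1 - a1) * (y - a2) - (b2 - a2) * (x - a1)). exact H.
    unfold ga, E, bg, bl, bm; simpl; fold D. unfold D in *. field. auto. }
  assert (Hneg : al <= 0 \/ be <= 0 \/ ga <= 0).
  { destruct (Rle_lt_dec al 0) as [h1|h1]; [left; auto|].
    destruct (Rle_lt_dec be 0) as [h2|h2]; [right; left; auto|].
    destruct (Rle_lt_dec ga 0) as [h3|h3]; [right; right; auto|].
    exfalso.
    set (m := Rmin al (Rmin be ga)).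
    assert (Hm : 0 < m) by (unfold m; repeat apply Rmin_glb_lt; auto).
    assert (Hma : m <= al) by (unfold m; apply Rmin_l).
    assert (Hmb : m <= be) by (unfold m; eapply Rle_trans; [apply Rmin_r| apply Rmin_l]).
    assert (Hmg : m <= ga) by (unfold m; eapply Rle_trans; [apply Rmin_r| apply Rmin_r]).
    destruct (Hbd (m/4)) as [_ [[z1 z2] [Hz Hzd]]]; [lra|].
    apply Hz. apply HT.
    set (d := pdist (x,y) (z1,z2)) in Hzd.
    assert (Hd0 : 0 <= d) by (unfold d, pdist, pnorm; apply sqrt_pos).
    assert (Hdd : (z1-x)*(z1-x) + (z2-y)*(z2-y) = d*d).
    { unfold d, pdist, pnorm, padd, pscale; simpl. rewrite sqrt_sqrt; [ring|apply nn]. }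
    assert (Hl := small (z1-x) (z2-y) b1 b2 D d Gb HD2 Hdd Hd0).
    assert (Hm2 : (z2-y)*(z2-y) + (z1-x)*(z1-x) = d*d) by lra.
    assert (Ga' : 3*(a2*a2+a1*a1) = 1) by lra.
    assert (Hmu := small (z2-y) (z1-x) a2 a1 D d Ga' HD2 Hm2 Hd0).
    set (dl := ((z1-x)*b2 - (z2-y)*b1)/D) in Hl.
    set (dm := ((z2-y)*a1 - (z1-x)*a2)/D) in Hmu.
    apply abs_b in Hl. apply abs_b in Hmu.
    assert (El : bl a1 a2 b1 b2 (z1,z2) = bl a1 a2 b1 b2 (x,y) + dl)
      by (unfold dl, bl; simpl; fold D; field; auto).
    assert (Em : bm a1 a2 b1 b2 (z1,z2) = bm a1 a2 b1 b2 (x,y) + dm)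
      by (unfold dm, bm; simpl; fold D; field; auto).
    exists (bl a1 a2 b1 b2 (z1,z2) + bg a1 a2 b1 b2 (z1,z2)),
           (bm a1 a2 b1 b2 (z1,z2) + bg a1 a2 b1 b2 (z1,z2)),
           (bg a1 a2 b1 b2 (z1,z2)).
    unfold al, be, ga, bg in *.
    rewrite El, Em.
    repeat split; try lra.
    rewrite <- El, <- Em. apply (bary_repr a1 a2 b1 b2 (z1,z2)). fold D; auto. }
  destruct c6_facts as [Hc6 Hc6p].
  assert (HDc : D = cos (PI/6) / 3 \/ D = - (cos (PI/6) / 3)).
  { assert ((D - cos (PI/6)/3) * (D + cos (PI/6)/3) = 0) by nra.
    apply Rmult_integral in H. destruct H; [left|right]; lra. }
  destruct HDc as [HDc|HDc].
  - destruct (main_pos K a1 a2 b1 b2 (-a1-b1) (-a2-b2) (x,y) al be ga HK Ka Kb Kc Kp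
      eq_refl eq_refl Ga Gb Gab HDc Hrep Hs Hal Hbe Hga Hneg) as [H0 [H1' H2']].
    split; auto. apply conv_triangle_in; auto.
  - assert (Gc : 3*((-a1-b1)*(-a1-b1)+(-a2-b2)*(-a2-b2)) = 1) by lra.
    assert (Gac : 6*(a1*(-a1-b1)+a2*(-a2-b2)) = -1) by lra.
    assert (HD' : a1*(-a2-b2) - a2*(-a1-b1) = cos (PI/6)/3) by (unfold D in HDc; lra).
    assert (Hrep' : (x,y) = comb3 al (a1,a2) ga (-a1-b1,-a2-b2) be (b1,b2)) by (rewrite Hrep; permc).
    destruct (main_pos K a1 a2 (-a1-b1) (-a2-b2) b1 b2 (x,y) al ga be HK Ka Kc Kb Kp
      ltac:(ring) ltac:(ring) Ga Gc Gac HD' Hrep' ltac:(lra) Hal Hga Hbe ltac:(tauto)) as [H0 [H1' H2']].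
    split; auto. apply conv_triangle_in; auto.
Qed.
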